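(* Let $\mathbb{X}$ be a smooth reflexive real Banach space with the Kadets–Klee property and $\mathbb{Y}$ a smooth real Banach space. Let $T\in\mathbb{K}(\mathbb{X},\mathbb{Y})$ with $\|T\|=1$ be a smooth operator. Then $M_T=\{\pm x\}$ for some $x\in S_{\mathbb{X}}$. Moreover, let $H$ be the unique hyperspace of $\mathbb{X}$ such that $x\perp_B H$; if $(x,Tx)$ is a CPP with CPP constant $(r,\mu)$ and $0<\|T\|_H<\mu$, then $T$ is not an extreme contraction.
   Context: All Banach spaces are real and of dimension greater than $1$. $\mathbb{K}(\mathbb{X},\mathbb{Y})$ is the space of compact linear operators with operator norm. $T$ is a smooth operator if it is a smooth point of the unit sphere of $\mathbb{K}(\mathbb{X},\mathbb{Y})$, i.e., there is a unique norm one functional $f$ on $\mathbb{K}(\mathbb{X},\mathbb{Y})$ with $f(T)=\|T\|$. $\mathbb{X}$ has the Kadets–Klee property if $x_n\rightharpoonup x$ weakly and $\|x_n\|\to\|x\|$ imply $x_n\to x$ in norm. $M_T=\{x\in S_{\mathbb{X}}:\|Tx\|=\|T\|\}$. $x\perp_B y$ means $\|x+\lambda y\|\ge\|x\|$ for all real $\lambda$; $x\perp_B H$ means $x\perp_B h$ for all $h\in H$; $x^\perp=\{y:x\perp_By\}$. A hyperspace is a closed subspace of codimension one. $\|T\|_H=\sup\{\|Th\|:h\in H,\|h\|=1\}$. An extreme contraction is a norm one operator that is an extreme point of the closed unit ball of $\mathbb{L}(\mathbb{X},\mathbb{Y})$. $B(x,r)=\{u:\|u-x\|<r\}$. For $x\in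 S_{\mathbb{X}}$, $v\in S_{\mathbb{Y}}$, $(x,v)$ is a CPP with CPP constant $(r,\mu)$ ($r,\mu>0$) if for all $z\in x^\perp\cap S_{\mathbb{X}}$, all $w\in v^\perp\cap S_{\mathbb{Y}}$ and all $a,b\in\mathbb{R}$, $ax+bz\in B(x,r)\cap S_{\mathbb{X}}$ implies $\|av+b\mu w\|\le1$. *)

(* Defs.v *)
From HB Require Import structures.
From mathcomp Require Import all_boot all_order all_algebra.
From mathcomp Require Import all_classical all_reals all_analysis.
Set Implicit Arguments. Unset Strict Implicit. Unset Printing Implicit Defensive.
Import Order.TTheory GRing.Theory Num.Theory.
Import numFieldNormedType.Exports.
Local Open Scope classical_set_scope.
Local Open Scope ring_scope.

Section Defs.
Variable R : realType.

Section OneSpace.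
Variable X : normedModType R.

Definition dim_gt1 : Prop :=
  exists u v : X, forall a b : R, a *: u + b *: v = 0 -> a = 0 /\ b = 0.

Definition lin_fun (f : X -> R) : Prop :=
  forall (a : R) (x y : X), f (a *: x + y) = a * f x + f y.

Definition in_dual (f : X -> R) : Prop :=
  lin_fun f /\ exists C : R, forall x, `|f x| <= C * `|x|.

Definition fnorm (f : X -> R) : R :=
  sup [set `|f x| | x in [set x : X | `|x| <= 1]].

Definition supp_fun (x : X) (f : X -> R) : Prop :=
  in_dual f /\ fnorm f = 1 /\ f x = `|x|.

Definition smooth_space : Prop :=
  forall x : X, `|x| = 1 ->
    (exists f, supp_fun x f) /\ (forall f g, supp_fun x f -> supp_fun x g -> f = g).

Definition in_bidual (phi : (X -> R) -> R) : Prop :=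
  (forall (a : R) f g, in_dual f -> in_dual g ->
     phi (fun x => a * f x + g x) = a * phi f + phi g) /\
  exists C : R, forall f, in_dual f -> `|phi f| <= C * fnorm f.

Definition reflexive_space : Prop :=
  forall phi, in_bidual phi -> exists x : X, forall f, in_dual f -> phi f = f x.

Definition weak_cvg (u : nat -> X) (x : X) : Prop :=
  forall f, in_dual f -> (fun n => f (u n)) @ \oo --> f x.

Definition kadets_klee : Prop :=
  forall (u : nat -> X) (x : X),
    weak_cvg u x -> (fun n => `|u n|) @ \oo --> `|x| -> u @ \oo --> x.

Definition bj_orth (x y : X) : Prop := forall l : R, `|x| <= `|x + l *: y|.

Definition hyperspace (H : set X) : Prop :=
  closed H /\ H 0 /\ (forall (a : R) u v, H u -> H v -> H (a *: u + v)) /\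
  exists z : X, ~ H z /\ forall v : X, exists h a, H h /\ v = h + a *: z.

End OneSpace.

Section Operators.
Variables X Y : normedModType R.

Definition lin_op (T : X -> Y) : Prop :=
  forall (a : R) (x y : X), T (a *: x + y) = a *: T x + T y.

Definition bounded_op (T : X -> Y) : Prop :=
  lin_op T /\ exists C : R, forall x, `|T x| <= C * `|x|.

Definition compact_op (T : X -> Y) : Prop :=
  lin_op T /\ compact (closure [set T x | x in [set x : X | `|x| <= 1]]).

Definition opnorm (T : X -> Y) : R :=
  sup [set `|T x| | x in [set x : X | `|x| <= 1]].

Definition opnorm_on (T : X -> Y) (H : set X) : R :=
  sup [set `|T h| | h in [set h : X | H h /\ `|h| = 1]].

Definition norm_att (T : X -> Y) : set X :=
  [set x : X | `|x| = 1 /\ `|T x| = opnorm T].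

Definition in_dualK (Phi : (X -> Y) -> R) : Prop :=
  (forall (a : R) S1 S2, compact_op S1 -> compact_op S2 ->
     Phi (fun x => a *: S1 x + S2 x) = a * Phi S1 + Phi S2) /\
  exists C : R, forall S, compact_op S -> `|Phi S| <= C * opnorm S.

Definition fnormK (Phi : (X -> Y) -> R) : R :=
  sup [set `|Phi S| | S in [set S : X -> Y | compact_op S /\ opnorm S <= 1]].

Definition supp_funK (T : X -> Y) (Phi : (X -> Y) -> R) : Prop :=
  in_dualK Phi /\ fnormK Phi = 1 /\ Phi T = opnorm T.

(* smooth point of (the unit sphere of) K(X,Y); functionals on K(X,Y) are
   identified when they agree on K(X,Y) *)
Definition smooth_op (T : X -> Y) : Prop :=
  (exists Phi, supp_funK T Phi) /\
  (forall Phi Psi, supp_funK T Phi -> supp_funK T Psi ->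
     forall S, compact_op S -> Phi S = Psi S).

Definition extreme_contraction (T : X -> Y) : Prop :=
  bounded_op T /\ opnorm T = 1 /\
  forall (S1 S2 : X -> Y) (t : R),
    bounded_op S1 -> opnorm S1 <= 1 -> bounded_op S2 -> opnorm S2 <= 1 ->
    0 < t < 1 -> T = (fun x => t *: S1 x + (1 - t) *: S2 x) -> S1 = S2.

Definition CPP (x : X) (v : Y) (r mu : R) : Prop :=
  `|x| = 1 /\ `|v| = 1 /\ 0 < r /\ 0 < mu /\
  forall (z : X) (w : Y) (a b : R),
    bj_orth x z -> `|z| = 1 -> bj_orth v w -> `|w| = 1 ->
    `|a *: x + b *: z - x| < r -> `|a *: x + b *: z| = 1 ->
    `|a *: v + (b * mu) *: w| <= 1.

End Operators.
End Defs.

(* Main.v *)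
Require Import Defs.
From mathcomp Require Import all_boot all_order all_algebra.
From mathcomp Require Import all_classical all_reals all_analysis.
From mathcomp Require Import ring lra.
Set Implicit Arguments. Unset Strict Implicit. Unset Printing Implicit Defensive.
Import Order.TTheory GRing.Theory Num.Theory.
Import numFieldNormedType.Exports.
Local Open Scope classical_set_scope.
Local Open Scope ring_scope.
Section S.
Variable R : realType.
Lemma sup_img_ub {T} (A : set T) (N : T -> R) M : (forall x, A x -> N x <= M) ->
  forall x, A x -> N x <= sup [set N x | x in A].
Proof. move=> hM x Ax; apply: ub_le_sup; [exists M => _ [y Ay <-]; exact: hM | by exists x]. Qed.
Lemma sup_img_le {T} (A : set T) (N : T -> R) M : A !=set0 -> (forall x, A x -> N x <= M) ->
  sup [set N x | x in A] <= M.
Proof. move=> [x Ax] hM; apply: ge_sup; [by exists (N x), x | by move=> _ [y Ay <-]; exact: hM]. Qed.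
Variables X Y : normedModType R.
Lemma lin0 (T : X -> Y) : lin_op T -> T 0 = 0.
Proof. move=> h; have := h 1 0 0; rewrite !scale1r !addr0 => e; apply: (addrI (T 0)); by rewrite addr0 -e. Qed.
Lemma linZ (T : X -> Y) : lin_op T -> forall a x, T (a *: x) = a *: T x.
Proof. move=> h a x; have := h a x 0; by rewrite !addr0 lin0 // addr0. Qed.
Lemma linD (T : X -> Y) : lin_op T -> forall x y, T (x + y) = T x + T y.
Proof. move=> h x y; have := h 1 x y; by rewrite !scale1r. Qed.
Lemma linN (T : X -> Y) : lin_op T -> forall x, T (- x) = - T x.
Proof. move=> h x; by rewrite -scaleN1r linZ // scaleN1r. Qed.
Lemma linB (T : X -> Y) : lin_op T -> forall x y, T (x - y) = T x - T y.
Proof. move=> h x y; by rewrite linD // linN. Qed.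
Definition bnd (T : X -> Y) := exists M, forall x, `|x| <= 1 -> `|T x| <= M.

Lemma bop_bnd (T : X -> Y) : bounded_op T -> bnd T.
Proof.
case=> _ [C hC]; exists `|C| => x hx; apply: (le_trans (hC x)).
apply: (le_trans (y := `|C| * `|x|)); first by apply: ler_wpM2r => //; exact: ler_norm.
by apply: ler_piMr.
Qed.

Lemma cop_bnd (T : X -> Y) : compact_op T -> bnd T.
Proof.
case=> _ /compact_bounded /ex_strict_bound_gt0 [M M0 hM]; exists M => x hx.
by apply/ltW/hM; apply: subset_closure; exists x.
Qed.

Lemma opnorm_ge (T : X -> Y) : bnd T -> forall x, `|x| <= 1 -> `|T x| <= opnorm T.
Proof. by case=> M hM; apply: (@sup_img_ub _ _ (fun x => `|T x|) M). Qed.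

Lemma opnorm_le (T : X -> Y) M : (forall x, `|x| <= 1 -> `|T x| <= M) -> opnorm T <= M.
Proof. by move=> hM; apply: (@sup_img_le _ _ (fun x => `|T x|)) => //; exists 0; rewrite /= normr0. Qed.

Lemma opnorm_ge0 (T : X -> Y) : bnd T -> 0 <= opnorm T.
Proof. by move=> hb; apply: le_trans (opnorm_ge hb (x := 0) _); rewrite ?normr0. Qed.

Lemma opnorm_bound (T : X -> Y) : lin_op T -> bnd T -> forall x, `|T x| <= opnorm T * `|x|.
Proof.
move=> hl hb x; have [->|x0] := eqVneq x 0; first by rewrite lin0 // !normr0 mulr0.
have nx : 0 < `|x| by rewrite normr_gt0.
set u := `|x|^-1 *: x.
have hx : x = `|x| *: u by rewrite /u scalerA divff ?gt_eqF // scale1r.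
have hu : `|u| = 1 by rewrite /u normrZ normfV normr_id mulVf ?gt_eqF.
rewrite {1}hx linZ // normrZ (ger0_norm (ltW nx)) mulrC.
by rewrite ler_pM2r //; apply: opnorm_ge => //; rewrite hu.
Qed.

End S.
Section U.
Variable R : realType.
Context (G : set_system nat) {GU : UltraFilter G}.

Lemma ulim_compact (Z : topologicalType) (K : set Z) (s : nat -> Z) :
  compact K -> (forall n, K (s n)) -> exists p, K p /\ s @ G --> p.
Proof.
move=> cK Ks.
have GK : G (s @^-1` K) by apply: filterS (@filterT _ G _) => n _; exact: Ks.
have [p [Kp clp]] := cK (s @ G) _ GK.
exists p; split => // V nV.
have [//|GC] := in_ultra_setVsetC (s @^-1` V) GU.
have [q [nq Vq]] := clp (~` V) V GC nV.
by exfalso; apply: nq.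
Qed.

Lemma ulimR (s : nat -> R) (C : R) : (forall n, `|s n| <= C) -> exists l, s @ G --> l /\ `|l| <= C.
Proof.
move=> hC.
have Ks : forall n, `[- C, C]%classic (s n) by move=> n; rewrite /= in_itv /= -ler_norml.
have cK : compact `[- C, C]%classic by exact: segment_compact.
have [l [Kl cl]] := ulim_compact cK Ks.
by exists l; split => //; move: Kl; rewrite /= in_itv /= -ler_norml.
Qed.

Lemma lip_cvg (V W : normedModType R) (h : V -> W) C {T} (F : set_system T) {FF : Filter F} (f : T -> V) y :
  0 < C -> (forall a b, `|h a - h b| <= C * `|a - b|) -> f @ F --> y -> (h \o f) @ F --> h y.
Proof.
move=> C0 hl /cvgrPdist_lt cf; apply/cvgrPdist_lt => e e0.
apply: filterS (cf (e / C) (divr_gt0 e0 C0)) => t ht /=.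
apply: le_lt_trans (hl _ _) _.
by rewrite -ltr_pdivlMl // mulrC.
Qed.
End U.
Section W.
Variable R : realType.
Context (G : set_system nat) {GU : UltraFilter G}.

Lemma ulim_uniq (Z : normedModType R) (s : nat -> Z) (a b : Z) : s @ G --> a -> s @ G --> b -> a = b.
Proof. by move=> ha hb; exact: (@norm_cvg_unique R Z (s @ G) _ a b ha hb). Qed.


Lemma dual_bnd (X : normedModType R) (f : X -> R) : in_dual f -> bnd f.
Proof. by move=> hf; apply: bop_bnd. Qed.

Lemma fbound (X : normedModType R) (f : X -> R) : in_dual f -> forall x, `|f x| <= fnorm f * `|x|.
Proof. by move=> hf; apply: opnorm_bound; [exact: hf.1 | exact: dual_bnd]. Qed.

Lemma fnorm_ge0 (X : normedModType R) (f : X -> R) : in_dual f -> 0 <= fnorm f.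
Proof. by move=> hf; apply: opnorm_ge0; exact: dual_bnd. Qed.

Lemma weak_ulim (X : normedModType R) (hr : reflexive_space X) (v : nat -> X) : (forall n, `|v n| <= 1) ->
  exists u, forall f, in_dual f -> (fun n => f (v n)) @ G --> f u.
Proof.
move=> hv.
pose phi (f : X -> R) := lim ((fun n => f (v n)) @ G).
have hlim : forall f, in_dual f -> (fun n => f (v n)) @ G --> phi f /\ `|phi f| <= fnorm f.
  move=> f hf.
  have hb : forall n, `|f (v n)| <= fnorm f.
    move=> n; apply: le_trans (fbound hf _) _; rewrite -[leRHS](mulr1 (fnorm f)).
    by apply: ler_wpM2l; [exact: fnorm_ge0 | exact: hv].
  have [l [cl hl]] := @ulimR R G GU (fun n => f (v n)) (fnorm f) hb.
  by rewrite /phi (cvg_lim _ cl).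
have [u hu] : exists u, forall f, in_dual f -> phi f = f u.
  apply: hr; split.
    move=> a f g hf hg.
    have c : (fun n => a * f (v n) + g (v n)) @ G --> a * phi f + phi g.
      by apply: cvgD; [apply: cvgMl_tmp; exact: (hlim f hf).1 | exact: (hlim g hg).1].
    by rewrite /phi (cvg_lim _ c).
  by exists 1 => f hf; rewrite mul1r; exact: (hlim f hf).2.
by exists u => f hf; rewrite -hu //; exact: (hlim f hf).1.
Qed.

Lemma supp_ex (X : normedModType R) (hs : smooth_space X) (w : X) : w != 0 ->
  exists f, in_dual f /\ (forall x, `|f x| <= `|x|) /\ f w = `|w|.
Proof.
move=> w0; have nw : 0 < `|w| by rewrite normr_gt0.
set u := `|w|^-1 *: w.
have hu : `|u| = 1 by rewrite /u normrZ normfV normr_id mulVf ?gt_eqF.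
have [[f [hf [f1 fu]]] _] := hs u hu.
exists f; split => //; split.
  by move=> x; apply: le_trans (fbound hf x) _; rewrite f1 mul1r.
have hw : w = `|w| *: u by rewrite /u scalerA divff ?gt_eqF // scale1r.
rewrite {1}hw (linZ hf.1) fu hu; exact: mulr1.
Qed.

Lemma sep (X : normedModType R) (hs : smooth_space X) (a b : X) : (forall f, in_dual f -> f a = f b) -> a = b.
Proof.
move=> h; apply/eqP; rewrite -subr_eq0; apply/negPn/negP => w0.
have [f [hf [_ fw]]] := supp_ex hs w0.
move: fw; rewrite (linB hf.1) h // subrr => /esym/eqP; rewrite normr_eq0 => e.
by rewrite e in w0.
Qed.

Lemma ulim_norm (X : normedModType R) (hs : smooth_space X) (v : nat -> X) u : (forall n, `|v n| <= 1) ->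
  (forall f, in_dual f -> (fun n => f (v n)) @ G --> f u) -> `|u| <= 1.
Proof.
move=> hv hu; have [->|u0] := eqVneq u 0; first by rewrite normr0.
have [f [hf [fb fu]]] := supp_ex hs u0.
rewrite -fu; apply: (closed_cvg (fun y : R => y <= 1)) (hu f hf).
  exact: closed_le.
apply: filterS (@filterT _ G _) => n _ /=.
by apply: le_trans (ler_norm _) _; apply: le_trans (fb _) (hv n).
Qed.

Lemma comp_dual (X : normedModType R) (Y : normedModType R) (T : X -> Y) (g : Y -> R) : bounded_op T -> in_dual g ->
  in_dual (fun x => g (T x)).
Proof.
move=> hT hg; split.
  by move=> a x y; rewrite hT.1 hg.1.
exists (fnorm g * opnorm T) => x /=.
apply: le_trans (fbound hg _) _; rewrite -mulrA; apply: ler_wpM2l; first exact: fnorm_ge0.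
apply: opnorm_bound; [exact: hT.1 | exact: bop_bnd].
Qed.

Lemma Tlim (X : normedModType R) (Y : normedModType R) (T : X -> Y) (hT : bounded_op T) (hsY : smooth_space Y)
  (v : nat -> X) u y : (forall f, in_dual f -> (fun n => f (v n)) @ G --> f u) ->
  (fun n => T (v n)) @ G --> y -> T u = y.
Proof.
move=> hu hy; apply: (sep hsY) => g hg.
have h1 := hu _ (comp_dual hT hg).
have h2 : (fun n => g (T (v n))) @ G --> g y.
  apply: (@lip_cvg R Y R g (fnorm g + 1) _ G _ (fun n => T (v n)) y) => //.
    by apply: ltr_wpDl; [exact: fnorm_ge0 | exact: ltr01].
  move=> a b; rewrite -(linB hg.1); apply: le_trans (fbound hg _) _.
  by apply: ler_wpM2r => //; rewrite lerDl.
exact: ulim_uniq h1 h2.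
Qed.
End W.
Section E.
Variable R : realType.
Context (G : set_system nat) {GU : UltraFilter G} (hG : forall A, \oo A -> G A).

Lemma sub_cvg (Z : topologicalType) (s : nat -> Z) (l : Z) : s @ \oo --> l -> s @ G --> l.
Proof. by move=> h A /h; exact: hG. Qed.

Lemma cop_bop (X Y : normedModType R) (T : X -> Y) : compact_op T -> bounded_op T.
Proof.
move=> hT; split; first exact: hT.1.
by exists (opnorm T); apply: opnorm_bound; [exact: hT.1 | exact: cop_bnd].
Qed.

Lemma attain (X Y : normedModType R) (hr : reflexive_space X) (hsX : smooth_space X)
  (hsY : smooth_space Y) (T : X -> Y) : compact_op T -> exists x, `|x| <= 1 /\ `|T x| = opnorm T.
Proof.
move=> hTc; have hb := cop_bnd hTc; have hbo := cop_bop hTc.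
have hv : forall n, exists v : X, `|v| <= 1 /\ opnorm T - harmonic n < `|T v|.
  move=> n.
  have ne : [set `|T x| | x in [set x : X | `|x| <= 1]] !=set0.
    by exists `|T 0|, 0 => //=; rewrite normr0.
  have lt : opnorm T - harmonic n < opnorm T.
    by have := harmonic_gt0 (R := R) n; lra.
  have [_ [v hv <-] ltv] := sup_gt ne lt.
  by exists v.
have [v hv'] := choice hv.
have Kv : forall n, closure [set T x | x in [set x : X | `|x| <= 1]] (T (v n)).
  by move=> n; apply: subset_closure; exists (v n) => //; exact: (hv' n).1.
have [y [_ cy]] := ulim_compact (G := G) (GU := GU) hTc.2 Kv.
have hv1 : forall n, `|v n| <= 1 by move=> n; exact: (hv' n).1.
have [u hu] := weak_ulim (G := G) (GU := GU) hr hv1.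
have un := ulim_norm (G := G) (GU := GU) hsX hv1 hu.
have Tu := Tlim (G := G) (GU := GU) hbo hsY hu cy.
exists u; split => //; apply/le_anti/andP; split; first exact: (opnorm_ge hb un).
rewrite Tu.
apply: (@ler_cvg_to _ G _ _ (fun n => opnorm T - harmonic n) (fun n => `|T (v n)|)).
- apply: sub_cvg; rewrite -[X in _ --> X]subr0; apply: cvgB; first exact: cvg_cst.
  exact: cvg_harmonic.
- exact: cvg_norm.
- by apply: filterS (@filterT _ G _) => n _; apply: ltW; exact: (hv' n).2.
Qed.
End E.

Section K.
Variable R : realType.
Variables X Y : normedModType R.

Lemma rank1_compact (f : X -> R) (y0 : Y) : in_dual f -> compact_op (fun v => f v *: y0).
Proof.
move=> hf; split.
  by move=> a x y /=; rewrite hf.1 scalerDl scalerA.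
set C := fnorm f.
set L := (fun t : R => t *: y0) @` `[- C, C]%classic.
have cL : compact L.
  apply: continuous_compact; last exact: segment_compact.
  apply: continuous_subspaceT => t; apply: cvgZr_tmp; exact: cvg_id.
have clL : closed L by apply: compact_closed => //; exact: norm_hausdorff.
apply: (subclosed_compact _ cL); first exact: closed_closure.
have sub : [set f x *: y0 | x in [set x : X | `|x| <= 1]] `<=` L.
  move=> _ [x hx <-]; exists (f x) => //.
  rewrite /= in_itv /= -ler_norml.
  by apply: opnorm_ge => //; exact: dual_bnd.
by move: (closureS sub); rewrite -(proj1 (closure_id L) clL).
Qed.

Lemma suppK (hsY : smooth_space Y) (T : X -> Y) (x : X) :
  compact_op T -> opnorm T = 1 -> `|x| = 1 -> `|T x| = 1 ->
  exists g, in_dual g /\ g (T x) = 1 /\ (forall z, `|g z| <= `|z|) /\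
    supp_funK T (fun S => g (S x)).
Proof.
move=> hTc hT1 hx hTx.
have [[g [hg [g1 gT]]] _] := hsY _ hTx.
have gb : forall z, `|g z| <= `|z|.
  by move=> z; apply: le_trans (fbound hg z) _; rewrite g1 mul1r.
have Sb : forall S, compact_op S -> `|g (S x)| <= opnorm S.
  move=> S hS; apply: le_trans (gb _) _.
  apply: le_trans (opnorm_bound hS.1 (cop_bnd hS) x) _.
  by rewrite hx mulr1.
exists g; split; first exact: hg.
split; first by rewrite gT hTx.
split; first exact: gb.
split; last first.
  split; last by rewrite gT hTx hT1.
  apply/le_anti/andP; split.
    apply: (@sup_img_le _ _ _ (fun S => `|g (S x)|)); first by exists T; split => //; rewrite hT1.
    by move=> S [hS hS1]; apply: le_trans (Sb S hS) hS1.
  rewrite -[X in X <= _]ger0_norm ?ler01 // -{1}hTx -gT.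
  apply: (@sup_img_ub _ _ _ (fun S => `|g (S x)|) 1); last by split => //; rewrite hT1.
  by move=> S [hS hS1]; apply: le_trans (Sb S hS) hS1.
split.
  by move=> a S1 S2 _ _ /=; rewrite hg.1.
by exists 1 => S hS; rewrite mul1r; exact: Sb.
Qed.

Lemma uniq_MT (hsX : smooth_space X) (hsY : smooth_space Y) (T : X -> Y) :
  compact_op T -> opnorm T = 1 -> smooth_op T ->
  forall x1 x2, norm_att T x1 -> norm_att T x2 -> x2 = x1 \/ x2 = - x1.
Proof.
move=> hTc hT1 hTs x1 x2 [h1 hT1'] [h2 hT2'].
rewrite hT1 in hT1' hT2'.
have [g1 [hg1 [g1T [g1b sp1]]]] := suppK hsY hTc hT1 h1 hT1'.
have [g2 [hg2 [g2T [g2b sp2]]]] := suppK hsY hTc hT1 h2 hT2'.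
have eqP12 := hTs.2 _ _ sp1 sp2.
set c := g2 (T x1).
have [w0|w0] := eqVneq (x1 - c *: x2) 0.
  have ex : x1 = c *: x2 by apply/eqP; rewrite -subr_eq0 w0.
  have nc : `|c| = 1 by rewrite -h1 ex normrZ h2 mulr1.
  have cc : c * c = 1 by rewrite -expr2 -real_normK ?num_real // nc expr1n.
  have ex2 : x2 = c *: x1 by rewrite ex scalerA cc scale1r.
  case: (lerP 0 c) => hc.
    by left; rewrite ex2 -(ger0_norm hc) nc scale1r.
  by right; rewrite ex2 -[c]opprK -(ltr0_norm hc) nc scaleN1r.
have [f [hf [_ fw]]] := supp_ex hsX w0.
have := eqP12 _ (rank1_compact (T x1) hf) => /=.
rewrite !(linZ hg1.1) !(linZ hg2.1) g1T -/c /GRing.scale /= mulr1 => e.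
move: fw; rewrite (linB hf.1) (linZ hf.1) /GRing.scale /= e mulrC subrr => /esym/eqP.
by rewrite normr_eq0 (negbTE w0).
Qed.
End K.
Section D.
Variable R : realType.
Variable X : normedModType R.

Lemma decomp (H : set X) (x : X) : hyperspace H -> (forall h, H h -> bj_orth x h) -> `|x| = 1 ->
  exists g : X -> R, lin_fun g /\ (forall v, H (v - g v *: x)) /\ (forall v, `|g v| <= `|v|) /\
    g x = 1 /\ (forall h, H h -> g h = 0).
Proof.
move=> [_ [H0 [Hlin [z0 [nz0 Hsp]]]]] hort hx.
have HD : forall u v, H u -> H v -> H (u + v) by move=> u v hu hv; have := Hlin 1 u v hu hv; rewrite scale1r.
have HZ : forall a u, H u -> H (a *: u) by move=> a u hu; have := Hlin a u 0 hu H0; rewrite addr0.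
have HB : forall u v, H u -> H v -> H (u - v).
  by move=> u v hu hv; apply: HD => //; rewrite -scaleN1r; exact: HZ.
have nHx : ~ H x.
  move=> Hx; have := hort x Hx (-1); rewrite scaleN1r subrr normr0 hx.
  by rewrite ler10.
have uniq : forall v a b, H (v - a *: x) -> H (v - b *: x) -> a = b.
  move=> v a b ha hb; have [//|ab] := eqVneq a b; exfalso; apply: nHx.
  have := HZ (b - a)^-1 _ (HB _ _ ha hb).
  have -> : v - a *: x - (v - b *: x) = (b - a) *: x.
    by rewrite scalerBl opprB addrC addrA subrK.
  by rewrite scalerA mulVf ?scale1r // subr_eq0 eq_sym.
have ex : forall v, exists a, H (v - a *: x).
  have [h0 [c [Hh0 ex0]]] := Hsp x.
  have c0 : c != 0.
    by apply/negP => /eqP c0; apply: nHx; rewrite ex0 c0 scale0r addr0.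
  move=> v; have [h [a [Hh ev]]] := Hsp v.
  exists (a / c); rewrite ev ex0 scalerDr scalerA mulfVK //.
  have -> : h + a *: z0 - ((a / c) *: h0 + a *: z0) = h - (a / c) *: h0.
    by rewrite opprD addrACA subrr addr0.
  by apply: HB => //; exact: HZ.
have [g hg] := choice ex.
exists g.
have glin : lin_fun g.
  move=> a u v; apply: (uniq (a *: u + v)); first exact: hg.
  have -> : a *: u + v - (a * g u + g v) *: x = a *: (u - g u *: x) + (v - g v *: x).
    by rewrite scalerBr scalerA scalerDl opprD addrACA.
  exact: Hlin.
split => //; split => //; split.
  move=> v; have [->|gv0] := eqVneq (g v) 0; first by rewrite normr0.
  have Hh := hg v; set h := v - g v *: x in Hh.
  have ev : v = g v *: (x + (g v)^-1 *: h).
    by rewrite scalerDr scalerA divff // scale1r /h addrC subrK.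
  rewrite {2}ev normrZ -{1}[`|g v|]mulr1 ler_wpM2l //.
  by have := hort h Hh (g v)^-1; rewrite hx.
split.
  by apply: (uniq x); [exact: hg | rewrite scale1r subrr].
by move=> h Hh; apply: (uniq h); [exact: hg | rewrite scale0r subr0].
Qed.
End D.
Section O.
Variable R : realType.
Variables X Y : normedModType R.

Lemma fnorm1 (f : X -> R) (x : X) : in_dual f -> (forall v, `|f v| <= `|v|) -> `|x| = 1 -> `|f x| = 1 ->
  fnorm f = 1.
Proof.
move=> hf hb hx hfx; apply/le_anti/andP; split.
  by apply: opnorm_le => v hv; apply: le_trans (hb v) hv.
by rewrite -[X in X <= _]hfx; apply: (opnorm_ge (dual_bnd hf)); rewrite hx.
Qed.

Lemma orthT (hsX : smooth_space X) (hsY : smooth_space Y) (T : X -> Y) (x : X) (g : X -> R) :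
  compact_op T -> opnorm T = 1 -> `|x| = 1 -> `|T x| = 1 ->
  lin_fun g -> (forall v, `|g v| <= `|v|) -> g x = 1 ->
  exists gy : Y -> R, in_dual gy /\ (forall z, `|gy z| <= `|z|) /\ gy (T x) = 1 /\
    forall v, gy (T v) = g v.
Proof.
move=> hTc hT1 hx hTx glin gb gx.
have [[gy [hgy [gy1 gyT]]] _] := hsY (T x) hTx.
have gyb : forall z, `|gy z| <= `|z|.
  by move=> z; apply: le_trans (fbound hgy z) _; rewrite gy1 mul1r.
have hgd : in_dual g by split => //; exists 1 => v; rewrite mul1r.
have sg : supp_fun x g.
  split => //; split; last by rewrite gx hx.
  by apply: (fnorm1 hgd gb hx); rewrite gx normr1.
have hcd := comp_dual (cop_bop hTc) hgy.
have Tb : forall v, `|T v| <= `|v|.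
  by move=> v; apply: le_trans (opnorm_bound hTc.1 (cop_bnd hTc) v) _; rewrite hT1 mul1r.
have sgy : supp_fun x (fun v => gy (T v)).
  split => //; split; last by rewrite /= gyT hTx hx.
  apply: (fnorm1 hcd _ hx); last by rewrite /= gyT hTx normr1.
  by move=> v /=; apply: le_trans (gyb _) (Tb v).
have e := (hsX x hx).2 _ _ sg sgy.
exists gy; split => //; split => //; split; first by rewrite gyT.
by move=> v; rewrite e.
Qed.
End O.
Section F.
Variable R : realType.
Context (G : set_system nat) {GU : UltraFilter G} (hG : forall A, \oo A -> G A).
Variables X Y : normedModType R.
Variables (hr : reflexive_space X) (hsX : smooth_space X) (hsY : smooth_space Y) (hk : kadets_klee X).
Variables (T : X -> Y) (hTc : compact_op T) (hT1 : opnorm T = 1) (x : X) (hx : `|x| = 1).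
Hypothesis hM : forall v, `|v| = 1 -> `|T v| = 1 -> v = x \/ v = - x.

Let hbo := cop_bop hTc.
Let Tb : forall v, `|T v| <= `|v|.
Proof. by move=> v; apply: le_trans (opnorm_bound hTc.1 (cop_bnd hTc) v) _; rewrite hT1 mul1r. Qed.

Lemma harm_anti (j k : nat) : (j <= k)%N -> harmonic k <= harmonic j :> R.
Proof. by move=> jk; rewrite /= lef_pV2 ?posrE ?ltr0Sn // ler_nat ltnS. Qed.

Lemma limL (y : Y) : `|y| = 1 -> forall z : nat -> X, (forall j, `|z j| <= 1) ->
  (fun j => T (z j)) @ \oo --> y ->
  exists u, T u = y /\ (u = x \/ u = - x) /\ forall f, in_dual f -> (fun j => f (z j)) @ G --> f u.
Proof.
move=> ny z hz cz.
have [u hu] := weak_ulim (G := G) (GU := GU) hr hz.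
have Tu := Tlim (G := G) (GU := GU) hbo hsY hu (sub_cvg hG cz).
have un := ulim_norm (G := G) (GU := GU) hsX hz hu.
exists u; split => //; split => //.
apply: hM; last by rewrite Tu.
apply/le_anti/andP; split => //; rewrite -ny -Tu; exact: Tb.
Qed.

Lemma uniqL (y : Y) u1 u2 : `|y| = 1 -> T u1 = y -> T u2 = y -> (u1 = x \/ u1 = - x) -> (u2 = x \/ u2 = - x) ->
  u1 = u2.
Proof.
move=> ny e1 e2 h1 h2.
have bad : T x = - T x -> False.
  move=> e; have : `|T x + T x| = 0 by rewrite {2}e subrr normr0.
  rewrite -mulr2n normrMn.
  have -> : `|T x| = 1 by apply/le_anti/andP; split; [rewrite -hx; exact: Tb | rewrite -ny -e1; case: h1 => ->; [exact: lexx | rewrite (linN hTc.1) normrN; exact: lexx]].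
  by move=> h; have := @ltr0Sn R 1; rewrite h ltxx.
case: h1 => -> in e1 *; case: h2 => -> in e2 * => //; exfalso; apply: bad.
  by rewrite -(linN hTc.1) e1 e2.
by rewrite -(linN hTc.1) e1 e2.
Qed.

Lemma far (r : R) : 0 < r -> exists2 eta, 0 < eta &
  forall v, `|v| = 1 -> r <= `|v - x| -> r <= `|v + x| -> `|T v| <= 1 - eta.
Proof.
move=> r0; apply: contrapT => hn.
have hv : forall n, exists v, `|v| = 1 /\ r <= `|v - x| /\ r <= `|v + x| /\ 1 - harmonic n < `|T v|.
  move=> n; apply: contrapT => hnv; apply: hn; exists (harmonic n); first exact: harmonic_gt0.
  move=> v h1 h2 h3; rewrite leNgt; apply/negP => lt; apply: hnv; exists v; split => //.
have [v hv'] := choice hv.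
have hv1 : forall n, `|v n| <= 1 by move=> n; rewrite (hv' n).1.
have Kv : forall n, closure [set T x | x in [set x : X | `|x| <= 1]] (T (v n)).
  by move=> n; apply: subset_closure; exists (v n) => //; exact: hv1.
have [y [_ cy]] := ulim_compact (G := G) (GU := GU) hTc.2 Kv.
have ny : `|y| = 1.
  apply/le_anti/andP; split.
    apply: (@ler_cvg_to _ G _ _ (fun n => `|T (v n)|) (fun n => 1)).
    - exact: cvg_norm.
    - exact: cvg_cst.
    - by apply: filterS (@filterT _ G _) => n _; apply: le_trans (Tb _) (hv1 n).
  apply: (@ler_cvg_to _ G _ _ (fun n => 1 - harmonic n) (fun n => `|T (v n)|)).
  - apply: sub_cvg => //; rewrite -[X in _ --> X]subr0; apply: cvgB; first exact: cvg_cst.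
    exact: cvg_harmonic.
  - exact: cvg_norm.
  - by apply: filterS (@filterT _ G _) => n _; apply: ltW; exact: (hv' n).2.2.2.
have pick : forall k, exists n, `|T (v n) - y| < harmonic k.
  move=> k; have := cy; move/cvgr_distC_lt => /(_ _ (harmonic_gt0 k)) /filter_ex [n hn0].
  by exists n.
have [nk hnk] := choice pick.
pose w k := v (nk k).
have hw1 : forall k, `|w k| <= 1 by move=> k; exact: hv1.
have tailT : forall phi : nat -> nat, (forall j, (j <= phi j)%N) ->
    (fun j => T (w (phi j))) @ \oo --> y.
  move=> phi hphi; apply/cvgrPdistC_lt => e e0.
  have := @cvg_harmonic R; move/cvgr_dist_lt => /(_ _ e0).
  apply: filterS => j hj; apply: lt_trans (hnk (phi j)) _.
  apply: le_lt_trans (harm_anti (hphi j)) _.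
  by move: hj; rewrite sub0r normrN ger0_norm // harmonic_ge0.
have [u [Tu [ux hu]]] := limL ny hw1 (tailT id (fun j => leqnn j)).
have wc : weak_cvg w u.
  move=> f hf; apply: contrapT => nc.
  have [e e0 he] : exists2 e, 0 < e & forall N, exists k, (N <= k)%N /\ e <= `|f u - f (w k)|.
    apply: contrapT => hne; apply: nc; apply/cvgrPdist_lt => e e0.
    apply: contrapT => hnn; apply: hne; exists e => // N.
    apply: contrapT => hk1; apply: hnn; exists N => // k /= Nk.
    rewrite ltNge; apply/negP => le; apply: hk1; exists k; split => //.
  have [psi hpsi] := choice he.
  have hz1 : forall j, `|w (psi j)| <= 1 by move=> j; exact: hw1.
  have [u' [Tu' [ux' hu']]] := limL ny hz1 (tailT psi (fun j => (hpsi j).1)).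
  have uu : u = u' := uniqL ny Tu Tu' ux ux'.
  have : e <= `|f u - f u'|.
    apply: (@ler_cvg_to _ G _ _ (fun j => e) (fun j => `|f u - f (w (psi j))|)).
    - exact: cvg_cst.
    - by apply: cvg_norm; apply: cvgB; [exact: cvg_cst | exact: hu'].
    - by apply: filterS (@filterT _ G _) => j _; exact: (hpsi j).2.
  by rewrite uu subrr normr0 leNgt e0.
have nc : (fun k => `|w k|) @ \oo --> `|u|.
  have -> : (fun k => `|w k|) = (fun k => 1) by apply/funext => k; rewrite (hv' (nk k)).1.
  by case: ux => ->; rewrite ?normrN hx; exact: cvg_cst.
have hwu : w @ \oo --> u := hk wc nc.
have := hwu; move/cvgr_dist_lt => /(_ _ r0) /filter_ex [k hk'].
have [_ [h2 [h3 _]]] := hv' (nk k).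
case: ux => eu; rewrite eu in hk'.
  by move: h2; rewrite distrC leNgt hk'.
by move: hk'; rewrite distrC opprK => hk2; move: h3; rewrite leNgt hk2.
Qed.
End F.
Section L.
Variable R : realType.
Variables X Y : normedModType R.

Lemma lin_add (A B : X -> Y) : lin_op A -> lin_op B -> lin_op (fun v => A v + B v).
Proof. by move=> hA hB a u w; rewrite hA hB scalerDr addrACA. Qed.

Lemma lin_scale (c : R) (A : X -> Y) : lin_op A -> lin_op (fun v => c *: A v).
Proof. by move=> hA a u w; rewrite hA scalerDr !scalerA mulrC. Qed.

Lemma rank1_lin (g : X -> R) (y0 : Y) : lin_fun g -> lin_op (fun v => g v *: y0).
Proof. by move=> hg a u w; rewrite hg scalerDl scalerA. Qed.

Lemma conv (p q : Y) (K k : R) : 0 < K -> 0 <= k <= K -> `|p| <= 1 -> `|p + K *: q| <= 1 ->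
  `|p + k *: q| <= 1.
Proof.
move=> K0 /andP [k0 kK] hp hK.
set l := k / K.
have l0 : 0 <= l by rewrite /l divr_ge0 // ltW.
have l1 : l <= 1 by rewrite /l ler_pdivrMr // mul1r.
have e : p + k *: q = l *: (p + K *: q) + (1 - l) *: p.
  rewrite scalerDr scalerA scalerBl scale1r [RHS]addrC [RHS]addrA subrK.
  by rewrite /l divfK // gt_eqF.
rewrite e; apply: le_trans (ler_normD _ _) _.
rewrite (normrZ l (p + K *: q)) (normrZ (1 - l) p) (ger0_norm l0) ger0_norm ?subr_ge0 //.
have := ler_wpM2l l0 hK; have : (1 - l) * `|p| <= (1 - l) * 1.
  by apply: ler_wpM2l; rewrite ?subr_ge0.
lra.
Qed.

Lemma homog (S : X -> Y) : lin_op S -> (forall u, `|u| = 1 -> `|S u| <= 1) -> forall v, `|S v| <= `|v|.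
Proof.
move=> hS h v; have [->|v0] := eqVneq v 0; first by rewrite lin0 // !normr0.
have nv : 0 < `|v| by rewrite normr_gt0.
set u := `|v|^-1 *: v.
have hv : v = `|v| *: u by rewrite /u scalerA divff ?gt_eqF // scale1r.
have hu : `|u| = 1 by rewrite /u normrZ normfV normr_id mulVf ?gt_eqF.
rewrite {1}hv linZ // normrZ (ger0_norm (ltW nv)) -[leRHS]mulr1.
by rewrite ler_pM2l // h.
Qed.
End L.
Section N.
Variable R : realType.
Context (G : set_system nat) {GU : UltraFilter G} (hG : forall A, \oo A -> G A).
Variables X Y : normedModType R.
Variables (hr : reflexive_space X) (hsX : smooth_space X) (hsY : smooth_space Y) (hk : kadets_klee X).
Variables (T : X -> Y) (hTc : compact_op T) (hT1 : opnorm T = 1) (x : X) (hx : `|x| = 1).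
Hypothesis hM : forall v, `|v| = 1 -> `|T v| = 1 -> v = x \/ v = - x.

Lemma not_extreme (H : set X) (r mu : R) : hyperspace H -> (forall h, H h -> bj_orth x h) ->
  CPP x (T x) r mu -> 0 < opnorm_on T H < mu -> ~ extreme_contraction T.
Proof.
move=> hH hort [_ [hTx [r0 [mu0 cpp]]]] /andP [m0 mmu] ext.
have hTl := hTc.1.
have Tb : forall v, `|T v| <= `|v|.
  by move=> v; apply: le_trans (opnorm_bound hTl (cop_bnd hTc) v) _; rewrite hT1 mul1r.
have [g [glin [gH [gb [gx gh0]]]]] := decomp hH hort hx.
have [gy [hgy [gyb [gyTx gyT]]]] := orthT hsX hsY hTc hT1 hx hTx glin gb gx.
have HZ : forall a u, H u -> H (a *: u).
  move: hH => [_ [H0 [Hlin _]]] a u hu; have := Hlin a u 0 hu H0; by rewrite addr0.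
have orthTH : forall h, H h -> forall c, bj_orth (T x) (c *: T h).
  move=> h Hh c l; rewrite hTx.
  have e : gy (T x + l *: (c *: T h)) = 1.
    by rewrite addrC scalerA hgy.1 gyT gh0 // mulr0 add0r.
  by rewrite -e; apply: le_trans (ler_norm _) (gyb _).
have [eta eta0 hfar] := far (G := G) (GU := GU) hG hr hsX hsY hk hTc hT1 hx hM r0.
set m := opnorm_on T H.
have mb : forall z, H z -> `|z| = 1 -> `|T z| <= m.
  move=> z Hz z1; apply: (@sup_img_ub _ _ _ (fun h => `|T h|) 1); last by split.
  by move=> h [_ h1]; rewrite -h1; exact: Tb.
set d := Num.min (eta / 2) (Num.min ((mu - m) / m) 1).
have d0 : 0 < d.
  have p1 : 0 < eta / 2 by rewrite divr_gt0.
  have p2 : 0 < (mu - m) / m by rewrite divr_gt0 // subr_gt0.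
  by rewrite /d !lt_min p1 p2 ltr01.
have d1 : d <= eta / 2 by rewrite /d ge_min lexx.
have d2 : d * m <= mu - m.
  rewrite -ler_pdivlMr //; apply: le_trans (_ : Num.min ((mu - m) / m) 1 <= _).
    by rewrite /d ge_min lexx orbT.
  by rewrite ge_min lexx.
have d3 : d <= 1.
  apply: le_trans (_ : Num.min ((mu - m) / m) 1 <= _); first by rewrite /d ge_min lexx orbT.
  by rewrite ge_min lexx orbT.
pose Q v := T v + (-1) *: (g v *: T x).
have Ql : lin_op Q by apply: lin_add => //; apply: lin_scale; exact: rank1_lin.
have QE : forall v, Q v = T (v - g v *: x) by move=> v; rewrite /Q scaleN1r (linB hTl) (linZ hTl).
pose S (c : R) v := T v + c *: Q v.
have Sl : forall c, lin_op (S c) by move=> c; apply: lin_add => //; exact: lin_scale.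
have S2b : forall v, `|S (- d) v| <= `|v|.
  move=> v.
  have e : S (- d) v = (1 - d) *: T v + (d * g v) *: T x.
    rewrite /S /Q scalerDr !scalerA mulrN1 opprK scalerBl scale1r addrA.
    by congr (_ + _); rewrite scaleNr.
  rewrite e; apply: le_trans (ler_normD _ _) _.
  rewrite (normrZ (1 - d)) (normrZ (d * g v)) ger0_norm ?subr_ge0 // normrM hTx mulr1.
  rewrite (ger0_norm (ltW d0)).
  have := ler_wpM2l (ltW d0) (gb v); have : (1 - d) * `|T v| <= (1 - d) * `|v|.
    by apply: ler_wpM2l; rewrite ?subr_ge0 // Tb.
  lra.
have S1u : forall v, `|v| = 1 -> `|S d v| <= 1.
  move=> v v1.
  set a := g v; set h := v - a *: x.
  have Hh : H h := gH v.
  have QvTh : Q v = T h by rewrite QE.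
  have Tv : T v = a *: T x + T h by rewrite /h (linB hTl) (linZ hTl) addrC subrK.
  have na : `|a| <= 1 by rewrite -v1; exact: gb.
  have nh : `|h| <= 2.
    apply: le_trans (ler_normB _ _) _; rewrite normrZ hx mulr1 v1.
    by have := na; lra.
  have [farv|nearv] := pselect (r <= `|v - x| /\ r <= `|v + x|).
    have := hfar v v1 farv.1 farv.2.
    rewrite /S QvTh => hTv; apply: le_trans (ler_normD _ _) _.
    rewrite normrZ (ger0_norm (ltW d0)).
    have := Tb h; have := ler_wpM2l (ltW d0) (Tb h).
    have := ler_wpM2l (ltW d0) nh; lra.
  have [Th0|Th0] := eqVneq (T h) 0.
    by rewrite /S QvTh Th0 scaler0 addr0 -v1; exact: Tb.
  have h0 : h != 0 by apply: contra_neq Th0 => ->; rewrite lin0.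
  set b := `|h|.
  have b0 : 0 < b by rewrite normr_gt0.
  set z := b^-1 *: h.
  have Hz : H z by exact: HZ.
  have z1 : `|z| = 1 by rewrite /z normrZ normfV normr_id mulVf ?gt_eqF.
  have hz : h = b *: z by rewrite /z scalerA divff ?gt_eqF // scale1r.
  set t := `|T z|.
  have Tz : T z = b^-1 *: T h by rewrite /z (linZ hTl).
  have t0 : 0 < t.
    rewrite normr_gt0 Tz scaler_eq0 negb_or Th0 andbT invr_eq0 gt_eqF //.
  set w := t^-1 *: T z.
  have w1 : `|w| = 1 by rewrite /w normrZ normfV normr_id mulVf ?gt_eqF.
  have ow : bj_orth (T x) w by rewrite /w Tz scalerA; exact: orthTH.
  have oz : bj_orth x z := hort z Hz.
  have ev : v = a *: x + b *: z by rewrite -hz /h addrC subrK.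
  have Thw : T h = (b * t) *: w.
    rewrite /w !scalerA Tz scalerA.
    have -> : b * t * t^-1 * b^-1 = 1 by field; rewrite ?gt_eqF.
    by rewrite scale1r.
  have cb : `|a *: T x + (b * mu) *: w| <= 1.
    have [nx|nnx] := pselect (`|v - x| < r).
      by apply: cpp => //; rewrite -ev.
    have nx2 : `|v + x| < r.
      rewrite ltNge; apply/negP => le; apply: nearv; split => //.
      by rewrite leNgt; apply/negP.
    have := cpp z w (- a) (- b) oz z1 ow w1.
    rewrite !scaleNr -opprD -ev -opprD normrN => /(_ nx2).
    rewrite normrN v1 mulNr scaleNr -opprD normrN => h'; exact: h'.
  have e : S d v = a *: T x + ((1 + d) * (b * t)) *: w.
    by rewrite /S QvTh Tv -addrA -{1}[T h]scale1r -scalerDl Thw scalerA.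
  rewrite e; apply: (conv (K := b * mu)) => //.
  - by rewrite mulr_gt0.
  - apply/andP; split.
      by apply: mulr_ge0; [apply: addr_ge0 => //; exact: ltW | apply: mulr_ge0; exact: ltW].
    rewrite mulrCA ler_pM2l //.
    have := mb z Hz z1; rewrite -/t => tm.
    have := ler_wpM2l (addr_ge0 ler01 (ltW d0)) tm; lra.
  - by rewrite normrZ hTx mulr1.
have S1b : forall v, `|S d v| <= `|v| by apply: homog.
have bS : forall c, (forall v, `|S c v| <= `|v|) -> bounded_op (S c) /\ opnorm (S c) <= 1.
  move=> c hc; split; first by split; [exact: Sl | exists 1 => v; rewrite mul1r].
  by apply: opnorm_le => v hv; apply: le_trans (hc v) hv.
have [b1 o1] := bS d S1b.
have [b2 o2] := bS (- d) S2b.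
have hh1 : (0:R) < (2:R)^-1 by lra.
have hh2 : (2:R)^-1 < 1 by lra.
have half : (0:R) < (2:R)^-1 < 1 by rewrite hh1 hh2.
have eT : T = (fun v => (2:R)^-1 *: S d v + (1 - (2:R)^-1) *: S (- d) v).
  apply: funext => v.
  have -> : 1 - (2:R)^-1 = (2:R)^-1 by field.
  rewrite -scalerDr /S addrACA -scalerDl addrN scale0r addr0.
  have -> : T v + T v = 2 *: T v by rewrite scaler_nat mulr2n.
  by rewrite scalerA mulVf ?scale1r // pnatr_eq0.
have eS := ext.2.2 _ _ _ b1 o1 b2 o2 half eT.
pose A := [set `|T h| | h in [set h : X | H h /\ `|h| = 1]].
have [ne|e0] := pselect (A !=set0); last first.
  have : A = set0 by rewrite predeqE => z; split => // Az; apply: e0; exists z.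
  by rewrite -/A in m0 *; move: m0; rewrite /m /opnorm_on -/A => + Ae; rewrite Ae sup0 ltxx.
have [_ [h0 [Hh0 _] <-] pos] := sup_gt ne m0.
have := congr1 (fun F => F h0) eS; rewrite /S => /addrI /eqP.
rewrite -subr_eq0 -scalerBl scaler_eq0 opprK => /orP [|].
  by rewrite gt_eqF // addr_gt0.
rewrite QE gh0 // scale0r subr0 => /eqP Th.
by move: pos; rewrite Th normr0 ltxx.
Qed.
End N.

Unset Implicit Arguments.

Theorem mainTheorem17 (R : realType) (X Y : completeNormedModType R)
  (hX2 : dim_gt1 X) (hY2 : dim_gt1 Y)
  (hXs : smooth_space X) (hXr : reflexive_space X) (hXk : kadets_klee X)
  (hYs : smooth_space Y)
  (T : X -> Y) (hTc : compact_op T) (hT1 : opnorm T = 1) (hTs : smooth_op T) :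
  exists x : X, `|x| = 1 /\ norm_att T = [set x; - x] /\
    forall (H : set X) (r mu : R),
      hyperspace H -> (forall h, H h -> bj_orth x h) ->
      CPP x (T x) r mu -> 0 < opnorm_on T H < mu ->
      ~ extreme_contraction T.
Proof.
have [G [GU hG]] := @ultraFilterLemma nat (\oo : set_system nat) _.
have [x0 [hx0 hTx0]] := attain (G := G) (GU := GU) hG hXr hXs hYs hTc.
rewrite hT1 in hTx0.
have hx : `|x0| = 1.
  apply/le_anti/andP; split => //; rewrite -[X in X <= _]hTx0.
  by apply: le_trans (opnorm_bound hTc.1 (cop_bnd hTc) x0) _; rewrite hT1 mul1r.
have hM : forall v, `|v| = 1 -> `|T v| = 1 -> v = x0 \/ v = - x0.
  move=> v v1 Tv1.
  apply: (uniq_MT hXs hYs hTc hT1 hTs); split => //; rewrite hT1 //.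
exists x0; split => //; split.
  rewrite predeqE => v; split.
    by move=> [v1 Tv1]; rewrite hT1 in Tv1; have [->|->] := hM v v1 Tv1; [left | right].
  move=> [->|->]; split; rewrite ?normrN ?(linN hTc.1) ?normrN ?hT1 //.
move=> H r mu hH hort hcpp hm.
exact: (not_extreme (G := G) (GU := GU) hG hXr hXs hYs hXk hTc hT1 hx hM hH hort hcpp hm).
Qed.
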